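(* Let $m\ge2$, $w$ an infinite periodic or Sturmian word over $\{0,1\}$, and $A=A(m,w)$ with the $\mathbb{Z}_2$-grading in which $z_1^{(1)},a$ are even and $b$ is odd. Then there is $n_0$ such that $c_{k,n-k}(A)\le 2n^2$ for all $n\ge n_0$ and all $0\le k\le n$.
   Context: $F$ is a field of characteristic zero. $A(m,w)$: basis $\{a,b,z_j^{(i)}: i\ge1,1\le j\le m+w_i\}$, products $z_j^{(i)}a=z_{j+1}^{(i)}$ for $j<m+w_i$, $z_{m+w_i}^{(i)}b=z_1^{(i+1)}$, all other products zero. The grading: $A_0=\mathrm{span}\{a,z_j^{(i)}:i\text{ odd}\}$, $A_1=\mathrm{span}\{b,z_j^{(i)}:i\text{ even}\}$. Sturmian: exactly $n+1$ distinct subwords of length $n$ for all $n$. $c_{k,n-k}(A)=\dim P_{k,n-k}/(P_{k,n-k}\cap Id^{gr}(A))$, where $P_{k,n-k}$ is the space of polynomials in the free nonassociative algebra multilinear in even variables $x_1,\dots,x_k$ and odd variables $y_1,\dots,y_{n-k}$, and $Id^{gr}(A)$ is the ideal of graded identities of $A$ (polynomials vanishing whenever even variables take values in $A_0$ and odd in $A_1$). *)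

(* Defs.v *)
From HB Require Import structures.
From mathcomp Require Import all_boot all_order all_algebra.
From Stdlib Require Import ClassicalEpsilon.
Set Implicit Arguments. Unset Strict Implicit. Unset Printing Implicit Defensive.
Import GRing.Theory.
Local Open Scope ring_scope.

(* An infinite word w = w_1 w_2 w_3 ... is a function w : nat -> bool;
   the letter w_i (i >= 1) is [w i] (true = 1, false = 0); [w 0] is unused. *)

Definition factor (w : nat -> bool) (i n : nat) : seq bool :=
  mkseq (fun t => w (i + t)%N) n.

Definition periodic_word (w : nat -> bool) : Prop :=
  exists p : nat, (0 < p)%N /\ forall i, (1 <= i)%N -> w (i + p)%N = w i.

Definition sturmian_word (w : nat -> bool) : Prop :=
  forall n : nat, exists s : seq (seq bool),
    [/\ uniq s, size s = n.+1 &
        forall u, u \in s <-> exists2 i, (1 <= i)%N & u = factor w i n].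

(* Basis: inl false = a, inl true = b, inr (i, j) = z_j^{(i)}. *)
Definition basis := (bool + nat * nat)%type.
Definition ba : basis := inl false.
Definition bb : basis := inl true.
Definition bz (i j : nat) : basis := inr (i, j).

Definition validB (m : nat) (w : nat -> bool) (x : basis) : bool :=
  match x with
  | inl _ => true
  | inr (i, j) => (1 <= i)%N && (1 <= j <= m + w i)%N
  end.

(* product of basis elements: None means 0 *)
Definition mulB (m : nat) (w : nat -> bool) (x y : basis) : option basis :=
  match x, y with
  | inr (i, j), inl false => if (j < m + w i)%N then Some (bz i j.+1) else None
  | inr (i, j), inl true  => if j == (m + w i)%N then Some (bz i.+1 1) else None
  | _, _ => None
  end.

(* Z_2-degree of a basis element (false = even, true = odd):
   a even, b odd, z_j^{(i)} even iff i odd. *)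
Definition degB (x : basis) : bool :=
  match x with
  | inl c => c
  | inr (i, _) => ~~ odd i
  end.

(* elements of A: finite formal linear combinations of basis elements *)
Definition elA (F : fieldType) := seq (F * basis).

Definition coefA (F : fieldType) (u : elA F) (e : basis) : F :=
  \sum_(p <- u | p.2 == e) p.1.

Definition scaleA (F : fieldType) (c : F) (u : elA F) : elA F :=
  [seq (c * p.1, p.2) | p <- u].

Definition mulA (F : fieldType) (m : nat) (w : nat -> bool) (u v : elA F) : elA F :=
  pmap (fun pq : (F * basis) * (F * basis) =>
          omap (fun e => (pq.1.1 * pq.2.1, e)) (mulB m w pq.1.2 pq.2.2))
       [seq (p, q) | p <- u, q <- v].

Definition homA (F : fieldType) (m : nat) (w : nat -> bool) (g : bool) (u : elA F) : bool :=
  all (fun p => validB m w p.2 && (degB p.2 == g)) u.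

Inductive nmon := NVar of nat | NMul of nmon & nmon.

Fixpoint leaves (t : nmon) : seq nat :=
  match t with NVar i => [:: i] | NMul t1 t2 => leaves t1 ++ leaves t2 end.

(* Variables of P_{k,n-k}: index i < k is the even variable x_{i+1},
   index k <= i < n is the odd variable y_{i-k+1}. *)
Definition multilin (n : nat) (t : nmon) : bool := perm_eq (leaves t) (iota 0 n).

Definition npoly (F : fieldType) := seq (F * nmon).

Definition inP (F : fieldType) (n : nat) (f : npoly F) : bool :=
  all (fun p => multilin n p.2) f.

Fixpoint evalM (F : fieldType) (m : nat) (w : nat -> bool) (s : nat -> elA F)
    (t : nmon) : elA F :=
  match t with
  | NVar i => s i
  | NMul t1 t2 => mulA m w (evalM m w s t1) (evalM m w s t2)
  end.

Definition evalP (F : fieldType) (m : nat) (w : nat -> bool) (s : nat -> elA F)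
    (f : npoly F) : elA F :=
  flatten [seq scaleA p.1 (evalM m w s p.2) | p <- f].

Definition graded_subst (F : fieldType) (m : nat) (w : nat -> bool) (k n : nat)
    (s : nat -> elA F) : Prop :=
  forall i, (i < n)%N -> homA m w (k <= i)%N (s i).

Definition is_gr_identity (F : fieldType) (m : nat) (w : nat -> bool) (k n : nat)
    (f : npoly F) : Prop :=
  forall s, graded_subst m w k n s -> forall e, coefA (evalP m w s f) e = 0.

Definition lincomb (F : fieldType) (cs : seq F) (fs : seq (npoly F)) : npoly F :=
  flatten [seq [seq (cf.1 * p.1, p.2) | p <- cf.2] | cf <- zip cs fs].

Definition indep_mod_Id (F : fieldType) (m : nat) (w : nat -> bool) (k n : nat)
    (fs : seq (npoly F)) : Prop :=
  all (inP n) fs /\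
  forall cs : seq F, size cs = size fs ->
    is_gr_identity m w k n (lincomb cs fs) -> all (fun c => c == 0) cs.

(* c_{k,n-k}(A) = dim P_{k,n-k}/(P_{k,n-k} ∩ Id^gr(A)), i.e. the maximal size
   of a family linearly independent modulo P_{k,n-k} ∩ Id^gr(A). *)
Definition gr_codim (F : fieldType) (m : nat) (w : nat -> bool) (k n : nat) : nat :=
  epsilon (inhabits 0%N) (fun d : nat =>
    (exists fs : seq (npoly F), size fs = d /\ indep_mod_Id m w k n fs) /\
    forall fs : seq (npoly F), indep_mod_Id m w k n fs -> (size fs <= d)%N).

(* Main.v *)
Require Import Defs.
From mathcomp Require Import all_boot all_order all_algebra.
From mathcomp Require Import ring zify.
Set Implicit Arguments. Unset Strict Implicit. Unset Printing Implicit Defensive.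
Import GRing.Theory.
Local Open Scope ring_scope.

Section Eval.
Variables (F : fieldType) (m : nat) (w : nat -> bool) (k : nat).

Definition pairA (u : elA F) (g : basis -> F) : F := \sum_(p <- u) p.1 * g p.2.

Lemma coefA_pair u e : coefA u e = pairA u (fun x => (x == e)%:R).
Proof.
rewrite /coefA /pairA big_mkcond /=; apply: eq_bigr => p _.
by case: eqP => _; rewrite ?mulr1 ?mulr0.
Qed.

Lemma pair_mulA X Y g : pairA (Defs.mulA m w X Y) g =
  \sum_(p <- X) p.1 * \sum_(q <- Y) q.1 * oapp g 0 (mulB m w p.2 q.2).
Proof.
rewrite /pairA /mulA big_pmap big_allpairs_dep; apply: eq_bigr => p _.
rewrite mulr_sumr; apply: eq_bigr => q _ /=.
by case: (mulB m w p.2 q.2) => [e|] /=; rewrite ?mulr0 // mulrA.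
Qed.

Definition isZ (x : basis) := if x is inr _ then true else false.

Lemma mulA_isZ (X Y : elA F) : all (fun p => isZ p.2) (Defs.mulA m w X Y).
Proof.
apply/allP => p; rewrite /Defs.mulA mem_pmap => /mapP [[[a x] [b y]] _] /=.
case: x => [c|[i j]]; first by [].
case: y => [[]|] //=; [case: eqP|case: ifP] => //= _ [] ->//.
Qed.

Lemma pair_mulA_Z X Y g : all (fun p => isZ p.2) Y -> pairA (Defs.mulA m w X Y) g = 0.
Proof.
move=> hY; rewrite pair_mulA big1 // => p _.
rewrite big1_seq ?mulr0 // => q /andP [_ qY].
move/allP: hY => /(_ q qY); case: q.2 => // z _.
by case: p.2 => [?|[??]]; rewrite ?mulr0.
Qed.

Lemma pair_mulA_hom X Y g c : homA m w c Y ->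
  pairA (Defs.mulA m w X Y) g =
  coefA Y (inl c) * pairA X (fun x => oapp g 0 (mulB m w x (inl c))).
Proof.
move=> hY; rewrite pair_mulA /pairA mulr_sumr; apply: eq_bigr => p _.
rewrite coefA_pair /pairA mulrCA; congr (_ * _).
rewrite mulr_suml; apply: eq_big_seq => q qY.
move/allP: hY => /(_ q qY) /andP [_ /eqP].
case: q.2 => [c' /= ->|[i j] _]; first by rewrite eqxx mulr1.
by rewrite /= mulr0 mul0r; case: p.2 => [?|[??]]; rewrite ?mulr0.
Qed.


Definition par (u : nat) : bool := (k <= u)%N.

Fixpoint lnd (t : nmon) : option (nat * seq nat) :=
  match t with
  | NVar v => Some (v, [::])
  | NMul t1 (NVar u) => omap (fun p => (p.1, rcons p.2 u)) (lnd t1)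
  | NMul _ _ => None
  end.

Fixpoint run (ox : option basis) (pi : seq bool) : option basis :=
  match pi with
  | [::] => ox
  | c :: pi' => run (obind (fun x => mulB m w x (inl c)) ox) pi'
  end.

Lemma run_rcons ox pi c :
  run ox (rcons pi c) = obind (fun x => mulB m w x (inl c)) (run ox pi).
Proof. by elim: pi ox => [|c' pi IH] ox //=. Qed.

Lemma run_None pi : run None pi = None.
Proof. by elim: pi. Qed.

Definition alpha (s : nat -> elA F) u := coefA (s u) (inl (par u)).

Lemma eval_pair s t g : (forall u, u \in leaves t -> homA m w (par u) (s u)) ->
  pairA (evalM m w s t) g =
  if lnd t is Some (v, r) then
    (\prod_(u <- r) alpha s u) * pairA (s v) (fun x => oapp g 0 (run (Some x) (map par r)))
  else 0.
Proof.
elim: t g => [v|t1 IH1 t2 IH2] g hs.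
  by rewrite /= big_nil mul1r.
case: t2 IH2 hs => [u|t3 t4] IH2 hs; last first.
  by rewrite /= pair_mulA_Z // mulA_isZ.
rewrite /= (pair_mulA_hom _ _ (hs u _)); last by rewrite /= mem_cat mem_seq1 eqxx orbT.
rewrite IH1; last by move=> x hx; apply: hs; rewrite /= mem_cat hx.
case: (lnd t1) => [[v r]|] /=; last by rewrite mulr0.
rewrite map_rcons big_rcons /= mulrA [alpha s u * _]mulrC; congr (_ * _).
apply: eq_bigr => p _; rewrite run_rcons; congr (_ * _).
by case: (run _ _).
Qed.

Fixpoint pwF (ws : nat -> bool) (j L : nat) : seq bool :=
  match L with
  | 0 => [::]
  | L'.+1 => if j == (m + ws 0)%N then true :: pwF (fun r => ws r.+1) 1 L'
             else false :: pwF ws j.+1 L'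
  end.

Lemma pwF_ext L : forall ws ws' j, (forall r, ws r = ws' r) -> pwF ws j L = pwF ws' j L.
Proof.
elim: L => [|L IH] ws ws' j h //=.
rewrite h; case: ifP => _; congr (_ :: _); apply: IH => //.
Qed.

Lemma pwF_loc L : forall ws ws' j K, (1 <= j)%N -> (L + j <= K * m + 1)%N ->
  (forall r, (r < K)%N -> ws r = ws' r) -> pwF ws j L = pwF ws' j L.
Proof.
elim: L => [|L IH] ws ws' j K hj hL h //=.
case: K hL h => [|K] hL h; first by lia.
rewrite h //; case: ifP => /eqP hj'; congr (_ :: _).
  apply: (IH _ _ 1 K) => //; first by lia.
  by move=> r hr; apply: h.
by apply: (IH _ _ j.+1 K.+1) => //; lia.
Qed.

Definition pwB (x : basis) (L : nat) : seq bool :=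
  match x with inr (i, j) => pwF (fun r => w (i + r)) j L | inl _ => [::] end.

Lemma runE pi : forall x, run (Some x) pi =
  if pi == pwB x (size pi) then run (Some x) (pwB x (size pi)) else None.
Proof.
elim: pi => [|c pi IH] x; first by case: x => [?|[??]].
case: x => [c0|[i j]] /=.
  exact: run_None.
rewrite addn0.
have E : pwF (fun r => w (i + r.+1)) 1 (size pi) = pwB (bz i.+1 1) (size pi).
  by apply: pwF_ext => r; rewrite addSnnS.
case: (boolP (j == (m + w i)%N)) => hj.
  have hlt : (j < m + w i)%N = false by rewrite (eqP hj) ltnn.
  case: c => /=.
    rewrite hj E eqseq_cons /=; exact: IH.
  rewrite hlt run_None; case: (_ == _ :> seq bool) => //=.
case: c => /=.
  by rewrite run_None; case: (_ == _ :> seq bool) => //=; rewrite (negbTE hj) run_None.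
case hlt: (j < m + w i)%N.
  by rewrite eqseq_cons /=; exact: (IH (bz i j.+1)).
by rewrite run_None; case: (_ == _ :> seq bool) => //=; rewrite ?hlt ?run_None.
Qed.

End Eval.

Section Main.
Variables (F : fieldType) (m : nat) (w : nat -> bool) (k n : nat).

Lemma pair_evalP (s : nat -> elA F) (f : Defs.npoly F) g : pairA (evalP m w s f) g =
  \sum_(p <- f) p.1 * pairA (evalM m w s p.2) g.
Proof.
rewrite /pairA /evalP big_flatten big_map; apply: eq_bigr => p _.
rewrite big_map mulr_sumr; apply: eq_bigr => q _ /=; by rewrite mulrA.
Qed.

Lemma leaves_lnd t v r : lnd t = Some (v, r) -> leaves t = v :: r.
Proof.
elim: t v r => [v' |t1 IH1 t2 _] v r /=; first by case=> -> <-.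
case: t2 => [u|??] //; case E: (lnd t1) => [[v' r']|] //= [<- <-].
by rewrite (IH1 _ _ E) -cats1.
Qed.

Definition matchM (t : nmon) (v : nat) (pi : seq bool) : bool :=
  if lnd t is Some (v', r) then (v' == v) && (map (par k) r == pi) else false.

Definition G (f : Defs.npoly F) (v : nat) (pi : seq bool) : F :=
  \sum_(p <- f) p.1 * (matchM p.2 v pi)%:R.

Lemma sum_pick (r : seq nat) x (H : nat -> F) : uniq r -> x \in r ->
  \sum_(v <- r) (x == v)%:R * H v = H x.
Proof.
move=> ur xr; rewrite (big_rem x) //= eqxx mul1r big1_seq ?addr0 // => v /andP [_ hv].
case: eqP => [ev|]; last by rewrite mul0r.
by rewrite ev mem_rem_uniqF in hv.
Qed.

Lemma eq_big_all (T : Type) (P : pred T) (r : seq T) (F1 F2 : T -> F) :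
  all P r -> (forall x, P x -> F1 x = F2 x) ->
  \sum_(x <- r) F1 x = \sum_(x <- r) F2 x.
Proof.
elim: r => [|x r IH] /=; first by rewrite !big_nil.
by move/andP=> [px pr] h; rewrite !big_cons h // IH.
Qed.

Variable keys : seq (nat * seq bool).
Hypothesis cover : forall v x, (v < n)%N -> validB m w x -> (v, pwB m w x n.-1) \in keys.

Lemma identity_of (f : Defs.npoly F) : all (fun p => multilin n p.2) f ->
  (forall key, key \in keys -> G f key.1 key.2 = 0) -> is_gr_identity m w k n f.
Proof.
move=> hf hG s hs e.
rewrite coefA_pair pair_evalP.
set g := fun x : basis => (x == e)%:R.
pose A v := \prod_(u <- rem v (iota 0 n)) alpha k s u.
pose X v (q : F * basis) := A v * q.1 * oapp g 0 (run m w (Some q.2) (pwB m w q.2 n.-1)).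
transitivity (\sum_(p <- f) \sum_(v <- iota 0 n) \sum_(q <- s v)
   X v q * (p.1 * (matchM p.2 v (pwB m w q.2 n.-1))%:R)).
  apply: (eq_big_all hf) => p hm.
  rewrite (eval_pair (k:=k)); last first.
    move=> u hu; apply: hs; move: hu; rewrite (perm_mem hm) mem_iota; lia.
  rewrite /matchM; case E: (lnd p.2) => [[v0 r]|]; last first.
    by rewrite mulr0 big1 // => v _; rewrite big1 // => q _; rewrite /= !mulr0.
  have hp := hm; rewrite /multilin (leaves_lnd E) in hp.
  have v0i : v0 \in iota 0 n by rewrite -(perm_mem hp) mem_head.
  have hr : perm_eq r (rem v0 (iota 0 n)).
    by rewrite -(perm_cons v0); apply: perm_trans hp (perm_to_rem v0i).
  have sr : size r = n.-1.
    by move/perm_size: hp; rewrite size_iota /= => <-.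
  transitivity (\sum_(v <- iota 0 n) (v0 == v)%:R * \sum_(q <- s v)
      X v q * (p.1 * (map (par k) r == pwB m w q.2 n.-1)%:R)); last first.
    apply: eq_bigr => v _; rewrite mulr_sumr; apply: eq_bigr => q _.
    by case: (v0 == v); rewrite ?mul0r ?mul1r //= !mulr0.
  rewrite sum_pick ?iota_uniq // (perm_big _ hr) -/(A v0).
  rewrite /pairA !mulr_sumr; apply: eq_bigr => q _.
  rewrite (runE _ _ (map (par k) r)) size_map sr /X.
  by case: (_ == _); rewrite /= ?mulr0 ?mulr1 -?mulrA //; ring.
rewrite exchange_big /= big1_seq // => v /andP [_ vi].
rewrite exchange_big /= big1_seq // => q /andP [_ qs].
rewrite -mulr_sumr.
have -> : \sum_(i <- f) i.1 * (matchM i.2 v (pwB m w q.2 n.-1))%:R = 0.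
  have vn : (v < n)%N by move: vi; rewrite mem_iota; lia.
  have hq := hs v vn; move/allP: hq => /(_ q qs) /andP [vq _].
  exact: (hG _ (cover vn vq)).
by rewrite mulr0.
Qed.


Lemma G_cat (f1 f2 : Defs.npoly F) v pi : G (f1 ++ f2) v pi = G f1 v pi + G f2 v pi.
Proof. by rewrite /G big_cat. Qed.

Lemma G_lincomb (cs : seq F) (fs : seq (Defs.npoly F)) v pi : size cs = size fs ->
  G (lincomb cs fs) v pi = \sum_(0 <= i < size fs) cs`_i * G (nth [::] fs i) v pi.
Proof.
elim: fs cs => [|f fs IH] [|c cs] //=; first by rewrite big_nil /G /lincomb big_nil.
move=> [hs]; rewrite big_nat_recl //=.
have -> : lincomb (c :: cs) (f :: fs) = [seq (c * p.1, p.2) | p <- f] ++ lincomb cs fs by [].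
rewrite G_cat IH //; congr (_ + _).
by rewrite /G big_map mulr_sumr; apply: eq_bigr => p _ /=; rewrite mulrA.
Qed.

Lemma inP_lincomb (cs : seq F) (fs : seq (Defs.npoly F)) :
  all (inP n) fs -> all (fun p => multilin n p.2) (lincomb cs fs).
Proof.
elim: fs cs => [|f fs IH] [|c cs] //= /andP [hf hfs].
have -> : lincomb (c :: cs) (f :: fs) = [seq (c * p.1, p.2) | p <- f] ++ lincomb cs fs by [].
by rewrite all_cat all_map IH // andbT.
Qed.

Definition Lvec (f : Defs.npoly F) : 'rV[F]_(size keys) :=
  \row_(c < size keys) G f (nth (0%N, [::]) keys c).1 (nth (0%N, [::]) keys c).2.

Lemma indep_size (fs : seq (Defs.npoly F)) :
  indep_mod_Id m w k n fs -> (size fs <= size keys)%N.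
Proof.
move=> [hin hind].
have hfree : free (in_tuple (map Lvec fs)).
  apply/freeP => kk hk i.
  pose cs := [seq kk j | j <- enum 'I_(size (map Lvec fs))].
  have scs : size cs = size fs by rewrite size_map size_enum_ord size_map.
  have := hind cs scs; set f := lincomb cs fs.
  have Hid : is_gr_identity m w k n f.
    apply: identity_of; first exact: inP_lincomb.
    move=> key hkey; rewrite G_lincomb //.
    have hc : (index key keys < size keys)%N by rewrite index_mem.
    have := congr1 (fun M : 'rV_(size keys) => M 0 (Ordinal hc)) hk.
    rewrite summxE mxE /= => heq; apply: (etrans _ heq).
    rewrite -(size_map Lvec fs) big_mkord; apply: eq_bigr => j _.
    have hj : (j < size fs)%N by rewrite -(size_map Lvec fs).
    rewrite !mxE /= (nth_map [::]) // mxE /= nth_index //.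
    by rewrite /cs (nth_map j) ?size_enum_ord // nth_ord_enum.
  move=> /(_ Hid) /allP /(_ (kk i)) h; apply/eqP; apply: h.
  by rewrite map_f // mem_enum.
have := dimvS (subvf <<in_tuple (map Lvec fs)>>%VS).
by rewrite dimvf (eqP hfree) /= size_map; move=> h; apply: (leq_trans h); rewrite dim_matrix mul1r.
Qed.

End Main.

Close Scope ring_scope.
From Stdlib Require Import Classical ClassicalEpsilon.

Lemma max_exists (Q : nat -> Prop) N : Q 0 -> (forall d, Q d -> d <= N) ->
  exists d, Q d /\ forall d', Q d' -> d' <= d.
Proof.
move=> Q0 QN.
have H : forall j, (exists d, Q d /\ forall d', Q d' -> d' <= d) \/ (exists d, Q d /\ j <= d).
  elim=> [|j [IH|[d [Qd jd]]]]; [by right; exists 0 | by left |].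
  case: (classic (exists d', Q d' /\ j.+1 <= d')) => [h|h]; first by right.
  left; exists d; split => // d' Qd'.
  have : ~ (j.+1 <= d') by move=> hd; apply: h; exists d'.
  lia.
case: (H N.+1) => // [[d [Qd hd]]]; have := QN d Qd; lia.
Qed.

Lemma wper (w : nat -> bool) p : (forall i, 1 <= i -> w (i + p) = w i) ->
  forall q a, 1 <= a -> w (a + q * p) = w a.
Proof.
move=> hw; elim=> [|q IH] a ha; first by rewrite mul0n addn0.
by rewrite mulSnr addnA hw ?IH //; lia.
Qed.

Lemma cover_exists (w : nat -> bool) : periodic_word w \/ sturmian_word w ->
  exists C, forall K, exists S : seq (seq bool),
    size S <= K.+1 + C /\ forall i, 1 <= i -> factor w i K \in S.
Proof.
case=> [[p [hp hw]]|hs].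
  exists p => K; exists [seq factor w i K | i <- iota 1 p]; split.
    by rewrite size_map size_iota leq_addl.
  move=> i hi; apply/mapP; exists (1 + (i - 1) %% p).
    by rewrite mem_iota; have := ltn_pmod (i - 1) hp; lia.
  apply: eq_mkseq => t.
  have E : i + t = (1 + (i - 1) %% p + t) + (i - 1) %/ p * p.
    by have := divn_eq (i - 1) p; lia.
  by rewrite E wper //; lia.
exists 0 => K; have [s [_ hsz hmem]] := hs K; exists s; split.
  by rewrite hsz addn0.
by move=> i hi; apply/hmem; exists i.
Qed.

Theorem lemma1 (F : fieldType) (charF0 : [pchar F]%R =i pred0)
    (m : nat) (w : nat -> bool) (hm : (2 <= m)%N)
    (hw : periodic_word w \/ sturmian_word w) :
  exists n0 : nat, forall n k : nat, (n0 <= n)%N -> (k <= n)%N ->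
    (gr_codim F m w k n <= 2 * n ^ 2)%N.
Proof.
have [C hC] := cover_exists hw.
exists (2 * (m + 1) * (C + 4) + 2) => n kk hn hk.
pose K := n %/ m + 2.
have [S [hS1 hS2]] := hC K.
pose PL := [::] :: [seq pwF m (fun r => nth false u r) j n.-1 | j <- iota 1 (m + 1), u <- S].
pose keys := [seq (v, pi) | v <- iota 0 n, pi <- PL].
have cover : forall v x, v < n -> validB m w x -> (v, pwB m w x n.-1) \in keys.
  move=> v [c|[i j]] vn hv.
    by apply: allpairs_f; [rewrite mem_iota; lia | rewrite /= mem_head].
  move/andP: hv => [hi /andP [hj1 hj2]].
  apply: allpairs_f; first by rewrite mem_iota; lia.
  rewrite /PL in_cons; apply/orP; right.
  have -> : pwB m w (inr (i, j)) n.-1 = pwF m (fun r => nth false (factor w i K) r) j n.-1.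
    apply: (pwF_loc (K := K)) => //.
      have := divn_eq n m; have := ltn_pmod n (ltnW hm).
      have : w i <= 1 by case: (w i).
      rewrite /K; nia.
    by move=> r hr; rewrite /factor nth_mkseq.
  apply: allpairs_f; last exact: hS2.
  have : w i <= 1 by case: (w i).
  by rewrite mem_iota; lia.
have bound := indep_size cover.
rewrite /gr_codim.
set P := (fun d : nat => _).
have ex : exists d, P d.
  pose Q := fun d => exists fs : seq (Defs.npoly F), size fs = d /\ indep_mod_Id m w kk n fs.
  have Q0 : Q 0 by exists [::]; split => //; split => // cs hcs _; case: cs hcs.
  have QN : forall d, Q d -> d <= size keys by move=> d [fs [<- h]]; exact: (bound F kk).
  have [d [[fs [<- hfs]] hd]] := max_exists Q0 QN.
  exists (size fs); split; first by exists fs.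
  by move=> fs' hfs'; apply: hd; exists fs'.
have [[fs [<- hfs]] _] := epsilon_spec (inhabits 0) P ex.
apply: (leq_trans (bound _ _ _ hfs)).
rewrite /keys size_allpairs size_iota /PL /= size_allpairs size_iota.
have hq : n %/ m * m <= n := leq_trunc_div n m.
have B : 1 + (m + 1) * size S <= 2 * n.
  apply: (@leq_trans (1 + (m + 1) * (K.+1 + C))).
    by rewrite leq_add2l leq_mul2l hS1 orbT.
  rewrite /K; nia.
rewrite expnS mulnA [2 * n]mulnC -mulnA leq_mul2l; apply/orP; right.
by move: B; rewrite expn1 add1n.
Qed.
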